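(* Let ${\bf r}=(r_0,r_1,\dots)$ be a finitely supported sequence of nonnegative integers with $n=\sum_{d\ge1}r_d\ge1$ and $\ell=-\sum_{d\ge0}(d-1)r_d\ge1$, let $k\ge0$ be an integer, and let ${\bf S}\in V_{\bf r}$. Let $\mathcal{CF}_{{\bf r},k,{\bf S},1}$ be the set of forests in $\mathcal{CF}_{{\bf r},k,{\bf S}}$ in which the internal vertex with label $1$ lies in the first tree. Then $$|\mathcal{CF}_{{\bf r},k,{\bf S},1}|=1^{r_1}2^{r_2}3^{r_3}\cdots\prod_{i=1}^{n-1}\big(r_0+i(1+k)\big).$$
   Context: A plane tree is an unlabelled rooted tree in which the children of every vertex are linearly ordered; a plane forest is a finite linearly ordered sequence of plane trees (so it has a first tree). For vertices $u,v$ in a tree, $v$ is a descendant of $u$ if $u$ lies on the path from the root to $v$ (so $u$ is a descendant of itself). The degree $d_v$ is the number of children of $v$; $v$ is internal if $d_v\ge1$. $I(F)$ is the set of internal vertices of $F$. A plane forest has type ${\bf r}$ if it has exactly $r_i$ vertices of degree $i$ for all $i\ge0$. A labelled forest is a plane forest $F$ together with a bijection (labelling) $I(F)\to[n]$. An internal vertex $v$ of a labelled forest is proper if no internal descendant of $v$ has a smaller label than $v$, and improper otherwise. Fix colors $c_1,c_2,\dots$ and distinct special colors $c_1',c_2',\dots$. A proper $k$-coloring of a labelled forest assigns to each internal vertex $v$ a color, taken from $\{c_1,\dots,c_{d_v}\}$ if $v$ is proper and from $\{c_1,\dots,c_{d_v}\}\cup\{c_1',\dots,c_k'\}$ if $v$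 is improper. A $k$-colored labelled forest is a labelled forest together with a proper $k$-coloring; $\mathcal{CF}_{{\bf r},k}$ is the set of $k$-colored labelled forests whose underlying plane forest has type ${\bf r}$. $V_{\bf r}$ is the set of sequences ${\bf S}=(S_1,S_2,\dots)$ of pairwise disjoint subsets of $[n]$ with union $[n]$ and $|S_i|=r_i$ for all $i\ge1$. For ${\bf S}\in V_{\bf r}$, $\mathcal{CF}_{{\bf r},k,{\bf S}}$ is the set of forests in $\mathcal{CF}_{{\bf r},k}$ in which every internal vertex $v$ has its label in $S_{d_v}$. *)

(* Defs.v *)
From mathcomp Require Import all_boot.
From Stdlib Require List.
Set Implicit Arguments. Unset Strict Implicit. Unset Printing Implicit Defensive.

Inductive color := Cnorm of nat | Cspec of nat.

(* A plane tree whose internal vertices carry a label and a color.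
   [Leaf] is a vertex of degree 0 (unlabelled, uncolored);
   [Node l c cs] is a vertex with label l, color c and ordered children cs
   (well-formed only when cs is non-empty, see [tvalid]). *)
Inductive ctree := Leaf | Node of nat & color & list ctree.

Definition cforest := seq ctree.

Fixpoint tlabels (t : ctree) : seq nat :=
  match t with
  | Leaf => [::]
  | Node l _ cs => l :: flatten (map tlabels cs)
  end.

Fixpoint tdegs (t : ctree) : seq nat :=
  match t with
  | Leaf => [:: 0]
  | Node _ _ cs => size cs :: flatten (map tdegs cs)
  end.

Definition flabels (F : cforest) : seq nat := flatten (map tlabels F).
Definition fdegs (F : cforest) : seq nat := flatten (map tdegs F).

Definition proper_node (l : nat) (cs : seq ctree) : bool :=
  all (fun x => l <= x) (flatten (map tlabels cs)).

Definition color_ok (k d : nat) (isproper : bool) (c : color) : bool :=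
  match c with
  | Cnorm i => (1 <= i) && (i <= d)
  | Cspec j => (~~ isproper) && (1 <= j) && (j <= k)
  end.

Fixpoint tvalid (k : nat) (S : nat -> pred nat) (t : ctree) : bool :=
  match t with
  | Leaf => true
  | Node l c cs =>
      [&& 0 < size cs, color_ok k (size cs) (proper_node l cs) c,
          S (size cs) l & all (tvalid k S) cs]
  end.

Definition rr (r : seq nat) (i : nat) : nat := nth 0 r i.

Definition nint (r : seq nat) : nat := \sum_(1 <= d < size r) rr r d.

Definition in_V (r : seq nat) (S : nat -> pred nat) : Prop :=
  [/\ forall i j x, 1 <= i -> 1 <= j -> i != j -> S i x -> S j x -> False,
      forall x, (1 <= x <= nint r) <-> (exists2 i, 1 <= i & S i x)
    & forall i, 1 <= i -> count (S i) (iota 1 (nint r)) = rr r i].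

Definition in_CF (r : seq nat) (k : nat) (S : nat -> pred nat) (F : cforest) : Prop :=
  [/\ forall i, count_mem i (fdegs F) = rr r i,
      perm_eq (flabels F) (iota 1 (nint r))
    & all (tvalid k S) F].

Definition in_CF1 (r : seq nat) (k : nat) (S : nat -> pred nat) (F : cforest) : Prop :=
  in_CF r k S F /\
  match F with t :: _ => 1 \in tlabels t | [::] => False end.

Definition has_card (P : cforest -> Prop) (N : nat) : Prop :=
  exists L : seq cforest,
    [/\ List.NoDup L, (forall F, List.In F L <-> P F) & size L = N].

(* Main.v *)
From HB Require Import structures.
Require Import Defs.
From mathcomp Require Import all_boot.
From Stdlib Require List.
From mathcomp Require Import zify.
Set Implicit Arguments. Unset Strict Implicit. Unset Printing Implicit Defensive.

Definition hc {T} (P : T -> Prop) (N : nat) : Prop :=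
  exists L : seq T, [/\ List.NoDup L, (forall x, List.In x L <-> P x) & size L = N].

Lemma hc_ext T (P Q : T -> Prop) N M :
  (forall x, P x <-> Q x) -> N = M -> hc P N -> hc Q M.
Proof.
move=> H <- [L [ND HL HS]]; exists L; split=> // x; rewrite HL; exact: H.
Qed.

Lemma hc0 T (P : T -> Prop) : (forall x, ~ P x) -> hc P 0.
Proof. by move=> H; exists [::]; split=> // [|x]; [constructor|split=> //; move/H]. Qed.

Lemma hc1 T (P : T -> Prop) a : (forall x, P x <-> x = a) -> hc P 1.
Proof.
move=> H; exists [:: a]; split=> //.
  by constructor; [case|constructor].
move=> x; rewrite H /=; split; [by case=> [->|]|by move=> ->; left].
Qed.

Lemma NoDup_map_in A B (f : A -> B) (l : seq A) :
  (forall x y, List.In x l -> List.In y l -> f x = f y -> x = y) ->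
  List.NoDup l -> List.NoDup (map f l).
Proof.
elim: l => [|a l IH] Hi Hnd /=; first by constructor.
inversion Hnd; subst; constructor.
  move/List.in_map_iff=> [y [Ey Hy]].
  have E : y = a by apply: Hi; [right|left|].
  by subst.
apply: IH => // x y Hx Hy; apply: Hi; by right.
Qed.

Lemma hc_map A B (P : A -> Prop) (f : A -> B) N :
  (forall x y, P x -> P y -> f x = f y -> x = y) -> hc P N ->
  hc (fun y => exists2 x, P x & y = f x) N.
Proof.
move=> Hi [L [ND HL HS]]; exists (map f L); split.
- apply: NoDup_map_in => // x y /HL Hx /HL Hy; exact: Hi.
- move=> y; rewrite List.in_map_iff; split.
    by move=> [x [<- /HL Hx]]; exists x.
  by move=> [x /HL Hx ->]; exists x.
- by rewrite size_map.
Qed.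

Lemma hc_union A (P Q : A -> Prop) N M :
  (forall x, P x -> Q x -> False) -> hc P N -> hc Q M ->
  hc (fun x => P x \/ Q x) (N + M).
Proof.
move=> Hd [L [ND HL HS]] [L' [ND' HL' HS']]; exists (L ++ L'); split.
- apply: List.NoDup_app => // a /HL Ha /HL' Hb; exact: Hd Ha Hb.
- by move=> x; rewrite List.in_app_iff HL HL'.
- by rewrite size_cat HS HS'.
Qed.

Lemma hc_union_seq (I : eqType) T (s : seq I) (P : I -> T -> Prop) (N : I -> nat) :
  uniq s ->
  (forall i j x, i \in s -> j \in s -> P i x -> P j x -> i = j) ->
  (forall i, i \in s -> hc (P i) (N i)) ->
  hc (fun x => exists2 i, i \in s & P i x) (\sum_(i <- s) N i).
Proof.
elim: s => [|a s IH] /=.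
  move=> _ _ _; rewrite big_nil; apply: hc0 => x [i]; by rewrite in_nil.
move=> /andP [Ha Hu] Hd Hc; rewrite big_cons.
apply: (hc_ext (P := fun x => P a x \/ (exists2 i, i \in s & P i x))).
- move=> x; split.
    case=> [H|[i Hi H]]; first by exists a; rewrite ?mem_head.
    by exists i; rewrite // in_cons Hi orbT.
  move=> [i]; rewrite in_cons => /orP [/eqP ->|Hi] H; first by left.
  by right; exists i.
- by [].
apply: hc_union.
- move=> x H [i Hi H']; have E : a = i.
    by apply: (Hd a i x) => //; rewrite !inE ?eqxx ?Hi ?orbT.
  by subst; rewrite Hi in Ha.
- by apply: Hc; rewrite mem_head.
apply: IH => //.
- move=> i j x Hi Hj; apply: Hd; by rewrite in_cons ?Hi ?Hj orbT.
- move=> i Hi; apply: Hc; by rewrite in_cons Hi orbT.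
Qed.


Lemma flabels_cat A B : flabels (A ++ B) = flabels A ++ flabels B.
Proof. by rewrite /flabels map_cat flatten_cat. Qed.

Lemma flabels_cons t A : flabels (t :: A) = tlabels t ++ flabels A.
Proof. by []. Qed.

Lemma fdegs_cat A B : fdegs (A ++ B) = fdegs A ++ fdegs B.
Proof. by rewrite /fdegs map_cat flatten_cat. Qed.

Lemma mem_flabels x F :
  x \in flabels F -> exists2 t, t < size F & x \in tlabels (nth Leaf F t).
Proof.
elim: F => [|u F IH] //=; rewrite flabels_cons mem_cat => /orP [H|/IH [t Ht H]].
  by exists 0.
by exists t.+1.
Qed.

Lemma mem_flabels_nth x F t :
  t < size F -> x \in tlabels (nth Leaf F t) -> x \in flabels F.
Proof.
elim: F t => [|u F IH] [|t] //= Ht H; rewrite flabels_cons mem_cat ?H //.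
by rewrite (IH t Ht H) orbT.
Qed.

Lemma tree_unique x F t t' :
  uniq (flabels F) -> t < size F -> t' < size F ->
  x \in tlabels (nth Leaf F t) -> x \in tlabels (nth Leaf F t') -> t = t'.
Proof.
elim: F t t' => [|u F IH] [|t] [|t'] //=; rewrite flabels_cons cat_uniq => /and3P [_ Hd Hu] Ht Ht' H H'.
- by case/hasP: Hd; exists x => //; exact: mem_flabels_nth Ht' H'.
- by case/hasP: Hd; exists x => //; exact: mem_flabels_nth Ht H.
- by rewrite (IH t t').
Qed.

Definition Theta (j a : nat) (c : color) (d : nat) (F : cforest) : cforest :=
  take j F ++ Node a c (take d (drop j F)) :: drop (j + d) F.

Lemma size_Theta j a c d F : j + d <= size F -> size (Theta j a c d F) = (size F - d).+1.
Proof.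
move=> H; rewrite /Theta size_cat /= size_take size_drop.
case: (ltnP j (size F)) => Hj; lia.
Qed.

Lemma nth_Theta j a c d F : j <= size F ->
  nth Leaf (Theta j a c d F) j = Node a c (take d (drop j F)).
Proof.
by move=> H; rewrite /Theta nth_cat size_takel // ltnn subnn.
Qed.

Lemma take_Theta j a c d F : j <= size F -> take j (Theta j a c d F) = take j F.
Proof.
by move=> H; rewrite /Theta take_cat size_takel // ltnn subnn take0 cats0.
Qed.

Lemma drop_Theta j a c d F : j <= size F -> drop j.+1 (Theta j a c d F) = drop (j + d) F.
Proof.
move=> H; rewrite /Theta drop_cat size_takel // ltnNge leqnSn /= subSnn /= drop0 //.
Qed.

Lemma Theta_inj j a c d F1 F2 :
  j + d <= size F1 -> j + d <= size F2 ->
  Theta j a c d F1 = Theta j a c d F2 -> F1 = F2.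
Proof.
move=> H1 H2 E.
have T : take j F1 = take j F2.
  by rewrite -(@take_Theta j a c d F1) ?E ?take_Theta //; lia.
have N : take d (drop j F1) = take d (drop j F2).
  have := @nth_Theta j a c d F1; rewrite E nth_Theta; last lia.
  by move=> /(_ ltac:(lia)) [].
have D : drop (j + d) F1 = drop (j + d) F2.
  by rewrite -(@drop_Theta j a c d F1) ?E ?drop_Theta //; lia.
rewrite -(cat_take_drop j F1) -(cat_take_drop j F2) T.
congr (_ ++ _).
rewrite -(cat_take_drop d (drop j F1)) -(cat_take_drop d (drop j F2)) N !drop_drop.
by rewrite addnC D.
Qed.

Lemma flabels_Theta j a c d F :
  perm_eq (flabels (Theta j a c d F)) (a :: flabels F).
Proof.
rewrite /Theta flabels_cat flabels_cons /=.
rewrite -[in X in perm_eq _ X](cat_take_drop j F) [in X in perm_eq _ X]flabels_cat.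
rewrite -[in X in perm_eq _ X](cat_take_drop d (drop j F)) drop_drop [in X in perm_eq _ X]flabels_cat addnC.
rewrite -cat_cons perm_catCA cat_cons.
by rewrite perm_cons perm_catCA.
Qed.


Definition color_eqb (c1 c2 : color) : bool :=
  match c1, c2 with
  | Cnorm a, Cnorm b => a == b
  | Cspec a, Cspec b => a == b
  | _, _ => false
  end.
Lemma color_eqP : Equality.axiom color_eqb.
Proof.
case=> a [] b /=; try by constructor.
- by apply: (iffP eqP) => [->|[]].
- by apply: (iffP eqP) => [->|[]].
Qed.
HB.instance Definition _ := hasDecEq.Build color color_eqP.

Definition Hdel (S : nat -> pred nat) (del : nat -> nat) (L : seq nat) : Prop :=
  forall x, x \in L -> 0 < del x /\ (forall i, 0 < i -> S i x = (i == del x)).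

Definition goodF k S (l : nat) (L : seq nat) (F : cforest) : Prop :=
  [/\ size F = l, perm_eq (flabels F) L & all (tvalid k S) F].

Definition Gj k S l L m j F := goodF k S l L F /\ m \in tlabels (nth Leaf F j).

Definition Grange k S l L m lo hi F :=
  goodF k S l L F /\ exists2 t, lo <= t < hi & m \in tlabels (nth Leaf F t).

Definition cols k (del : nat -> nat) (m a : nat) : seq color :=
  map Cnorm (iota 1 (del a)) ++ (if a == m then [::] else map Cspec (iota 1 k)).

Lemma all_Theta k S j a c d F :
  all (tvalid k S) (Theta j a c d F) =
  [&& 0 < size (take d (drop j F)),
      color_ok k (size (take d (drop j F))) (proper_node a (take d (drop j F))) c,
      S (size (take d (drop j F))) a & all (tvalid k S) F].
Proof.
have E : all (tvalid k S) F = [&& all (tvalid k S) (take j F),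
   all (tvalid k S) (take d (drop j F)) & all (tvalid k S) (drop (j + d) F)].
  by rewrite -{1}(cat_take_drop j F) all_cat -{1}(cat_take_drop d (drop j F)) all_cat drop_drop addnC.
rewrite /Theta all_cat /= E.
by case: (all _ (take j F)); case: (0 < _); case: (color_ok _ _ _ _); case: (S _ _);
  case: (all _ (take d _)); case: (all _ (drop _ _)); rewrite ?andbF ?andbT.
Qed.

Lemma mem_cols k del m a c :
  c \in cols k del m a =
  match c with
  | Cnorm p => (1 <= p) && (p <= del a)
  | Cspec p => (a != m) && (1 <= p) && (p <= k)
  end.
Proof.
rewrite /cols mem_cat; case: c => p.
  rewrite (mem_map (fun x y (E : Cnorm x = Cnorm y) => ltac:(by case: E))) mem_iota.
  case: (a == m) => /=; rewrite ?orbF; last first.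
    have -> : (Cnorm p \in map Cspec (iota 1 k)) = false.
      by apply/negbTE/mapP => [[? _]].
    by rewrite orbF; lia.
  lia.
have -> : (Cspec p \in map Cnorm (iota 1 (del a))) = false.
  by apply/negbTE/mapP => [[? _]].
case: (a == m) => //=.
rewrite (mem_map (fun x y (E : Cspec x = Cspec y) => ltac:(by case: E))) mem_iota; lia.
Qed.

Lemma Theta_eq j a c cs A B :
  size A = j -> Theta j a c (size cs) (A ++ cs ++ B) = A ++ Node a c cs :: B.
Proof.
move=> HA; rewrite /Theta take_size_cat // -HA drop_size_cat // take_size_cat //.
by rewrite addnC -drop_drop drop_size_cat // drop_size_cat.
Qed.

Lemma Gj_decomp k S del l L m j F :
  Hdel S del L -> uniq L -> m \in L -> (forall x, x \in L -> m <= x) -> j < l ->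
  Gj k S l L m j F <->
  exists2 a, a \in L & exists2 c, c \in cols k del m a &
    exists2 F', (if a == m then goodF k S (l.-1 + del a) (rem a L) F'
                 else Grange k S (l.-1 + del a) (rem a L) m j (j + del a) F')
    & F = Theta j a c (del a) F'.
Proof.
move=> Hd Hu Hm Hmin Hj; split.
  move=> [[Hs Hp Hv] Hmj].
  have Hjs : j < size F by rewrite Hs.
  case E: (nth Leaf F j) Hmj => [|a c cs] //= Hmj.
  have Ha : a \in L.
    by rewrite -(perm_mem Hp); apply: (mem_flabels_nth Hjs); rewrite E /= mem_head.
  have Hva : tvalid k S (Node a c cs) by rewrite -E; apply: (all_nthP Leaf Hv).
  move: Hva => /= /and4P [Hc0 Hco HS Hcs].
  have [Hda HSa] := Hd a Ha.
  have Hsz : size cs = del a by apply/eqP; rewrite -(HSa _ Hc0).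
  have HcsL : forall x, x \in flabels cs -> x \in L.
    move=> x Hx; rewrite -(perm_mem Hp); apply: (mem_flabels_nth Hjs).
    by rewrite E /= in_cons; apply/orP; right; exact: Hx.
  exists a => //; exists c.
    rewrite mem_cols; case: c Hco {E} => p /=; rewrite ?Hsz // => /andP [/andP [Hnp ->] ->].
    rewrite !andbT; apply/eqP => Eam; subst a; move/negP: Hnp; apply.
    by apply/allP => x Hx; apply: Hmin; apply: HcsL.
  set F' := take j F ++ cs ++ drop j.+1 F.
  have EF : F = Theta j a c (del a) F'.
    by rewrite -Hsz Theta_eq ?size_takel ?(ltnW Hjs) // -E -drop_nth // cat_take_drop.
  exists F'; last exact: EF.
  have HG : goodF k S (l.-1 + del a) (rem a L) F'.
    split.
    - rewrite !size_cat size_takel ?(ltnW Hjs) // Hsz size_drop; lia.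
    - have HT := flabels_Theta j a c (del a) F'; rewrite -EF in HT.
      rewrite perm_sym in HT; have H1 := perm_trans HT Hp.
      by rewrite -(perm_cons a) (perm_trans H1 (perm_to_rem Ha)).
    - by move: Hv; rewrite EF all_Theta => /and4P [].
  case: eqP => Eam //; split => //.
  have Hmc : m \in flabels cs.
    by move: Hmj; rewrite in_cons eq_sym => /orP [/eqP E'|] //; case: Eam.
  have [u Hu' Hmu] := mem_flabels Hmc.
  exists (j + u); first lia.
  rewrite /F' nth_cat size_takel ?(ltnW Hjs) // ltnNge leq_addr /= addKn nth_cat Hu'.
  exact: Hmu.
move=> [a Ha [c Hc [F' HQ ->]]].
have [Hda HSa] := Hd a Ha.
have HF' : goodF k S (l.-1 + del a) (rem a L) F' by case: (a == m) HQ => // [[]].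
case: HF' => Hs' Hp' Hv'.
have Hjd : j + del a <= size F' by rewrite Hs'; lia.
have Hcs : size (take (del a) (drop j F')) = del a by rewrite size_takel // size_drop; lia.
have HmF : a != m -> m \in flabels (take (del a) (drop j F')).
  move=> Hne; move: HQ; rewrite (negbTE Hne) => [[_ [t /andP [Ht1 Ht2] Hmt]]].
  apply: (@mem_flabels_nth _ _ (t - j)); first by rewrite Hcs; lia.
  by rewrite nth_take ?nth_drop ?subnKC //; lia.
split; [split|].
- rewrite size_Theta // Hs'; lia.
- apply: perm_trans (flabels_Theta _ _ _ _ _) _.
  by rewrite perm_sym (perm_trans (perm_to_rem Ha)) // perm_cons perm_sym.
- rewrite all_Theta Hv' Hcs HSa ?eqxx // andbT Hda /=.
  move: Hc; rewrite mem_cols; case: c => p /=; rewrite andbT //.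
  move=> /andP [/andP [Hne ->] ->].
  rewrite !andbT; apply/negP => /allP H.
  have := H m (HmF Hne); have := Hmin a Ha; move: Hne; lia.
- rewrite nth_Theta; last lia.
  rewrite /= in_cons; case: (eqVneq m a) => [//|Hne] /=.
  by apply: HmF; rewrite eq_sym.
Qed.


Definition r0f (del : nat -> nat) L l := l + \sum_(x <- L) (del x).-1.
Definition Pi k R n := \prod_(1 <= i < n) (R + i * (1 + k)).
Definition W k del L l := (\prod_(x <- L) del x) * Pi k (r0f del L l) (size L).
Definition Nq k del (L : seq nat) l m a :=
  if a == m then (if rem a L == [::] then 1
                  else (l.-1 + del a) * W k del (rem a L) (l.-1 + del a))
  else del a * W k del (rem a L) (l.-1 + del a).

Lemma sum_const_seq (I : Type) (s : seq I) (c : nat) : \sum_(i <- s) c = size s * c.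
Proof. by rewrite big_const_seq count_predT iter_addn_0 mulnC. Qed.

Lemma size_cols k del m a : size (cols k del m a) = del a + (if a == m then 0 else k).
Proof. by rewrite /cols size_cat size_map size_iota; case: (a == m); rewrite ?size_map ?size_iota. Qed.

Lemma prod_rem (f : nat -> nat) (L : seq nat) a :
  a \in L -> \prod_(x <- L) f x = f a * \prod_(x <- rem a L) f x.
Proof. by move=> Ha; rewrite (perm_big _ (perm_to_rem Ha)) big_cons. Qed.

Lemma sum_rem (f : nat -> nat) (L : seq nat) a :
  a \in L -> \sum_(x <- L) f x = f a + \sum_(x <- rem a L) f x.
Proof. by move=> Ha; rewrite (perm_big _ (perm_to_rem Ha)) big_cons. Qed.

Lemma r0f_rem del L l a : a \in L -> 0 < l -> 0 < del a ->
  r0f del (rem a L) (l.-1 + del a) = r0f del L l.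
Proof.
move=> Ha Hl Hd; rewrite /r0f (sum_rem _ Ha).
move: (del a) Hd (\sum_(x <- rem a L) _) => d Hd s.
by case: l Hl => // l _; case: d Hd => // d _ /=; lia.
Qed.

Lemma W_rec k del L l m : uniq L -> m \in L -> (forall x, x \in L -> 0 < del x) -> 0 < l ->
  W k del L l = \sum_(a <- L) \sum_(c <- cols k del m a) Nq k del L l m a.
Proof.
move=> Hu Hm Hd Hl.
rewrite (eq_bigr (fun a => size (cols k del m a) * Nq k del L l m a)); last first.
  by move=> a _; rewrite sum_const_seq.
have HsL : 0 < size L by case: L Hm {Hu Hd}.
case E : (size L) HsL => [//|n] _.
case: n E => [|n] E.
  case: L Hm Hu Hd E => [//|x [|//]] Hm _ Hd _.
  rewrite inE in Hm; move/eqP: Hm => <-.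
  rewrite big_cons big_nil /W /Nq /= eqxx /Pi big_geq // big_cons big_nil size_cols eqxx /=; lia.
set P := \prod_(x <- L) del x.
set R := r0f del L l.
set Pn := Pi k R n.+1.
have HW : W k del L l = P * Pn * (R + n.+1 * (1 + k)).
  by rewrite /W E /Pi big_nat_recr //= mulnA.
rewrite HW.
rewrite (eq_big_seq (fun a => P * Pn * (if a == m then l.-1 + del a else del a + k))); last first.
  move=> a Ha; rewrite size_cols /Nq.
  have Hrs : size (rem a L) = n.+1 by rewrite size_rem // E.
  have Hr : rem a L == [::] = false by apply/negbTE; apply/eqP => H; rewrite H in Hrs.
  rewrite Hr /W r0f_rem ?Hd // Hrs -/R -/Pn /P (prod_rem _ Ha).
  move: (\prod_(x <- rem a L) del x) (del a) => p d.
  case: (a == m); nia.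
have -> : \sum_(i <- L) P * Pn * (if i == m then l.-1 + del i else del i + k) =
  P * Pn * \sum_(i <- L) (if i == m then l.-1 + del i else del i + k) by rewrite big_distrr.
rewrite (bigD1_seq m Hm Hu) /= eqxx.
have H1 : \sum_(i <- L | i != m) (if i == m then l.-1 + del i else del i + k) =
  \sum_(i <- L | i != m) (del i).-1 + \sum_(i <- L | i != m) (1 + k).
  rewrite -big_split big_seq_cond [RHS]big_seq_cond; apply: eq_bigr => i /andP [Hi /negbTE ->].
  by case: (del i) (Hd i Hi) => // d _ /=; lia.
have Hc : count (fun i => i != m) L = n.+1.
  have := count_predC (pred1 m) L; rewrite E.
  have -> : count (pred1 m) L = 1 by rewrite (count_uniq_mem _ Hu) Hm.
  by move=> H; rewrite -[RHS]/(n.+2.-1) -H /=; apply: eq_count.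
have H2 : \sum_(i <- L | i != m) (1 + k) = n.+1 * (1 + k).
  by rewrite big_const_seq Hc iter_addn_0 mulnC.
have H3 : R = l + (del m).-1 + \sum_(i <- L | i != m) (del i).-1.
  by rewrite /R /r0f (bigD1_seq m Hm Hu) addnA.
rewrite H1 H2 H3; congr (_ * _); rewrite -(subn1 l) -(subn1 (del m)); have := Hd m Hm; lia.
Qed.


Lemma cols_uniq k del m a : uniq (cols k del m a).
Proof.
rewrite /cols cat_uniq (map_inj_uniq (fun x y (E : Cnorm x = Cnorm y) => ltac:(by case: E))) iota_uniq /=.
case: (a == m) => //=.
rewrite (map_inj_uniq (fun x y (E : Cspec x = Cspec y) => ltac:(by case: E))) iota_uniq andbT.
by apply/hasP => [[c /mapP [p _ ->] /mapP [q _]]].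
Qed.

Lemma flabels_nil F : flabels F = [::] -> F = nseq (size F) Leaf.
Proof.
elim: F => [|t F IH] //=; rewrite flabels_cons; case: t => [|a c cs] //= H.
by rewrite -IH.
Qed.

Lemma goodF_nil k S l F : goodF k S l [::] F <-> F = nseq l Leaf.
Proof.
split.
  move=> [Hs Hp _]; rewrite -Hs; apply: flabels_nil.
  by apply/nilP; rewrite /nilp (perm_size Hp).
move=> ->; split; first by rewrite size_nseq.
  by elim: l => //= l IH.
by elim: l.
Qed.

Lemma exists_min (L : seq nat) : L != [::] -> exists2 m, m \in L & forall x, x \in L -> m <= x.
Proof.
elim: L => [//|a L IH] _.
case: (eqVneq L [::]) => [->|/IH [m Hm Hmin]].
  by exists a; rewrite ?mem_head // => x; rewrite inE => /eqP ->.
exists (minn a m).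
  by case: leqP => _; rewrite inE ?eqxx ?Hm ?orbT.
move=> x; rewrite inE => /orP [/eqP ->|Hx]; first by rewrite geq_minl.
by rewrite geq_min Hmin ?orbT.
Qed.

Lemma Grange_count k S l L m lo hi N :
  uniq L -> lo <= hi -> hi <= l -> (forall t, t < l -> hc (Gj k S l L m t) N) ->
  hc (Grange k S l L m lo hi) ((hi - lo) * N).
Proof.
move=> Hu Hlo Hhi HN.
apply: (hc_ext (P := fun F => exists2 t, t \in iota lo (hi - lo) & Gj k S l L m t F)
  (N := \sum_(t <- iota lo (hi - lo)) N)).
- move=> F; split.
    by move=> [t]; rewrite mem_iota => Ht [HG Hm]; split=> //; exists t => //; lia.
  move=> [HG [t Ht Hm]]; exists t; last by split.
  by rewrite mem_iota; lia.
- by rewrite sum_const_seq size_iota.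
apply: hc_union_seq; first exact: iota_uniq.
- move=> t t' F; rewrite !mem_iota => Ht Ht' [[Hs Hp _] H1] [_ H2].
  apply: (tree_unique (x := m) (F := F)) => //; try lia.
  by rewrite (perm_uniq Hp).
- move=> t; rewrite mem_iota => Ht; apply: HN; lia.
Qed.

Lemma main_count k S del n : forall L, size L = n -> uniq L -> Hdel S del L ->
  forall m, m \in L -> (forall x, x \in L -> m <= x) ->
  forall l j, j < l -> hc (Gj k S l L m j) (W k del L l).
Proof.
elim/ltn_ind: n => n IH L HL Hu Hd m Hm Hmin l j Hj.
have Hl : 0 < l by lia.
have HdL : forall x, x \in L -> 0 < del x by move=> x /Hd [].
have Hn : 0 < n by rewrite -HL; case: (L) Hm.
have HdR : forall a, Hdel S del (rem a L) by move=> a x /mem_rem /Hd.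
have HsR : forall a, a \in L -> size (rem a L) < n by move=> a Ha; rewrite size_rem // HL; lia.
have HQs : forall a F', (if a == m then goodF k S (l.-1 + del a) (rem a L) F'
                 else Grange k S (l.-1 + del a) (rem a L) m j (j + del a) F') ->
                 size F' = l.-1 + del a.
  by move=> a F'; case: (a == m) => [[]|[[]]].
have HQ : forall a, a \in L ->
   hc (fun F' => if a == m then goodF k S (l.-1 + del a) (rem a L) F'
                 else Grange k S (l.-1 + del a) (rem a L) m j (j + del a) F')
      (Nq k del L l m a).
  move=> a Ha; rewrite /Nq; case: eqP => Eam.
    subst a; case: eqP => Er.
      rewrite Er; apply: (hc1 (a := nseq (l.-1 + del m) Leaf)) => F; exact: goodF_nil.
    have [m' Hm' Hmin'] := exists_min (introN eqP Er).
    apply: (hc_ext (P := Grange k S (l.-1 + del m) (rem m L) m' 0 (l.-1 + del m))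
      (N := (l.-1 + del m - 0) * W k del (rem m L) (l.-1 + del m))).
    - move=> F; split => [[]//|HG]; split => //.
      case: HG => Hs Hp _.
      have : m' \in flabels F by rewrite (perm_mem Hp).
      by move/mem_flabels => [t Ht H]; exists t => //; rewrite -Hs.
    - by rewrite subn0.
    apply: Grange_count => //; first exact: rem_uniq.
    move=> t Ht; apply: (IH (size (rem m L))) => //; [exact: HsR|exact: rem_uniq].
  apply: (hc_ext (P := Grange k S (l.-1 + del a) (rem a L) m j (j + del a))
     (N := (j + del a - j) * W k del (rem a L) (l.-1 + del a))) => //.
    by rewrite addKn.
  apply: Grange_count; [exact: rem_uniq|lia|lia|].
  have HmR : m \in rem a L by rewrite (mem_rem_uniq _ Hu) inE Hm andbT; apply/eqP => E; apply: Eam.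
  move=> t Ht; apply: (IH (size (rem a L))) => //; [exact: HsR|exact: rem_uniq|].
  by move=> x /mem_rem /Hmin.
rewrite (@W_rec k del L l m Hu Hm HdL Hl).
apply: (hc_ext (P := fun F => exists2 a, a \in L & exists2 c, c \in cols k del m a &
    exists2 F', (if a == m then goodF k S (l.-1 + del a) (rem a L) F'
                 else Grange k S (l.-1 + del a) (rem a L) m j (j + del a) F')
    & F = Theta j a c (del a) F')
  (N := \sum_(a <- L) \sum_(c <- cols k del m a) Nq k del L l m a)).
- move=> F; apply: iff_sym; exact: Gj_decomp.
- by [].
apply: hc_union_seq => //.
- move=> a a' F Ha Ha' [c _ [F' HF' ->]] [c' _ [F'' HF'' E]].
  have := congr1 (fun G => nth Leaf G j) E; rewrite /= !nth_Theta; first by case.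
    by rewrite (HQs _ _ HF''); lia.
  by rewrite (HQs _ _ HF'); lia.
move=> a Ha; apply: hc_union_seq; first exact: cols_uniq.
- move=> c c' F _ _ [F' HF' ->] [F'' HF'' E].
  have := congr1 (fun G => nth Leaf G j) E; rewrite /= !nth_Theta; first by case.
    by rewrite (HQs _ _ HF''); lia.
  by rewrite (HQs _ _ HF'); lia.
move=> c Hc; apply: hc_map; last exact: HQ.
move=> F1 F2 H1 H2; apply: Theta_inj.
  by rewrite (HQs _ _ H1); lia.
by rewrite (HQs _ _ H2); lia.
Qed.


Fixpoint ctree_ind2 (P : ctree -> Prop) (HL : P Leaf)
  (HN : forall l c cs, List.Forall P cs -> P (Node l c cs)) (t : ctree) : P t :=
  match t with
  | Leaf => HL
  | Node l c cs => HN l c cs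
      ((fix F (cs : list ctree) : List.Forall P cs :=
          match cs with
          | nil => @List.Forall_nil _ P
          | t0 :: cs' => @List.Forall_cons _ P t0 cs' (ctree_ind2 HL HN t0) (F cs')
          end) cs)
  end.

Lemma flat_tdegs_cons t cs :
  flatten (map tdegs (t :: cs)) = tdegs t ++ flatten (map tdegs cs).
Proof. by []. Qed.

Lemma sumn_tdegs t : sumn (tdegs t) + 1 = size (tdegs t).
Proof.
elim/ctree_ind2: t => [//|l c cs H] /=.
suff : sumn (flatten (map tdegs cs)) + size cs = size (flatten (map tdegs cs)) by lia.
elim: cs H => [//|t cs IH] H; inversion H; subst.
rewrite flat_tdegs_cons sumn_cat !size_cat /= -(IH ltac:(assumption)); lia.
Qed.

Lemma sumn_fdegs F : sumn (fdegs F) + size F = size (fdegs F).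
Proof.
elim: F => [//|t F IH]; rewrite /fdegs /= sumn_cat size_cat -IH -sumn_tdegs /fdegs; lia.
Qed.

Lemma count_tdegs k S del t i : 0 < i -> Hdel S del (tlabels t) -> tvalid k S t ->
  count_mem i (tdegs t) = count (fun x => del x == i) (tlabels t).
Proof.
move=> Hi; elim/ctree_ind2: t => [|l c cs H] /=; first by case: i Hi.
move=> Hd /and4P [Hc0 _ HS Hv].
have [_ HSl] := Hd l (mem_head _ _).
have -> : size cs = del l by apply/eqP; rewrite -HSl.
congr (_ + _).
have Hd' : Hdel S del (flatten (map tlabels cs)) by move=> x Hx; apply: Hd; rewrite inE Hx orbT.
elim: cs H Hd' Hv {Hc0 HS Hd} => [//|t cs IH] H Hd Hv; inversion H; subst.
move: Hv => /= /andP [Hvt Hvs].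
rewrite !count_cat; move: Hd; rewrite /= => Hd.
congr (_ + _).
  by apply: H2 => // x Hx; apply: Hd; rewrite mem_cat Hx.
by apply: IH => // x Hx; apply: Hd; rewrite mem_cat Hx orbT.
Qed.

Lemma count_fdegs k S del F i : 0 < i -> Hdel S del (flabels F) -> all (tvalid k S) F ->
  count_mem i (fdegs F) = count (fun x => del x == i) (flabels F).
Proof.
move=> Hi; elim: F => [//|t F IH] Hd /= /andP [Hvt Hv].
rewrite /fdegs /= count_cat -/(fdegs F) flabels_cons count_cat.
congr (_ + _).
  by apply: (@count_tdegs k S) => // x Hx; apply: Hd; rewrite flabels_cons mem_cat Hx.
by apply: IH => // x Hx; apply: Hd; rewrite flabels_cons mem_cat Hx orbT.
Qed.

Lemma sum_count_ord b (s : seq nat) : all (fun x => x < b) s ->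
  size s = \sum_(i < b) count_mem (i : nat) s /\ sumn s = \sum_(i < b) i * count_mem (i:nat) s.
Proof.
elim: s => [|x s IH] /=.
  by move=> _; split; symmetry; apply: big1 => i; rewrite ?muln0.
move=> /andP [Hx /IH [E1 E2]].
have F1 : \sum_(i < b) (x == i :> nat) = 1.
  rewrite (bigD1 (Ordinal Hx)) //= eqxx big1 // => i.
  by rewrite -val_eqE /= eq_sym => /negbTE ->.
have F2 : \sum_(i < b) i * (x == i :> nat) = x.
  rewrite (bigD1 (Ordinal Hx)) //= eqxx big1 ?muln1 ?addn0 // => i.
  by rewrite -val_eqE /= eq_sym => /negbTE ->; rewrite muln0.
split.
  by rewrite (eq_bigr (fun i : 'I_b => (x == i :> nat) + count_mem (i : nat) s)) // big_split /= F1 -E1.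
rewrite (eq_bigr (fun i : 'I_b => i * (x == i :> nat) + i * count_mem (i : nat) s)).
  by rewrite big_split /= F2 -E2.
by move=> i _ /=; rewrite mulnDr.
Qed.


Definition delS (r : seq nat) (S : nat -> pred nat) x :=
  nth 0 [seq i <- iota 1 (size r) | S i x] 0.

Lemma rr_pos r i : 0 < rr r i -> i < size r.
Proof. by rewrite /rr; case: (ltnP i (size r)) => // H; rewrite nth_default. Qed.

Lemma S_lt r S i x : in_V r S -> 0 < i -> S i x -> i < size r.
Proof.
move=> [HV1 HV2 HV3] Hi Hx; apply: rr_pos; rewrite -HV3 // -has_count.
apply/hasP; exists x => //.
rewrite mem_iota.
have : 1 <= x <= nint r by apply/(HV2 x); exists i.
lia.
Qed.

Lemma delS_spec r S x : in_V r S -> 1 <= x <= nint r ->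
  [/\ 0 < delS r S x, S (delS r S x) x & delS r S x < size r].
Proof.
move=> HV Hx; have [_ HV2 _] := HV.
have [i Hi HSi] := (HV2 x).1 Hx.
have Hir := S_lt HV Hi HSi.
have Hne : 0 < size [seq i <- iota 1 (size r) | S i x].
  rewrite -has_predT; apply/hasP; exists i => //.
  by rewrite mem_filter HSi mem_iota; lia.
have := mem_nth 0 Hne; rewrite mem_filter mem_iota -/(delS r S x) => /andP [HS Hr].
split=> //; first lia.
apply: S_lt HV _ HS; lia.
Qed.

Lemma Hdel_iota r S : in_V r S -> Hdel S (delS r S) (iota 1 (nint r)).
Proof.
move=> HV x; rewrite mem_iota => Hx.
have Hx' : 1 <= x <= nint r by lia.
have [H1 H2 H3] := delS_spec HV Hx'.
split=> // i Hi; apply/idP/eqP => [HSi|->] //.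
case: (eqVneq i (delS r S x)) => // Hne.
by case: HV => HV1 _ _; case: (HV1 i (delS r S x) x).
Qed.

Lemma prod_if_count (P : pred nat) d s :
  \prod_(x <- s) (if P x then d else 1) = d ^ count P s.
Proof.
elim: s => [|x s IH]; first by rewrite big_nil.
by rewrite big_cons IH /=; case: (P x); rewrite ?expnS ?mul1n.
Qed.

Lemma sum_if_count (P : pred nat) d s :
  \sum_(x <- s) (if P x then d else 0) = d * count P s.
Proof.
elim: s => [|x s IH]; first by rewrite big_nil muln0.
by rewrite big_cons IH /=; case: (P x); rewrite ?mulnDr ?muln1.
Qed.

Lemma sel_prod (S : nat -> pred nat) sz y x :
  0 < y -> y < sz -> (forall i, 0 < i -> S i x = (i == y)) ->
  y = \prod_(1 <= d < sz) (if S d x then d else 1).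
Proof.
move=> H0 H1 HS.
rewrite (bigD1_seq y) ?mem_index_iota ?iota_uniq //=; last lia.
rewrite HS // eqxx big1_seq ?muln1 // => d /andP [Hd]; rewrite mem_index_iota => Hd'.
by rewrite HS ?(negbTE Hd) //; lia.
Qed.

Lemma sel_sum (S : nat -> pred nat) sz y x :
  0 < y -> y < sz -> (forall i, 0 < i -> S i x = (i == y)) ->
  y = \sum_(1 <= d < sz) (if S d x then d else 0).
Proof.
move=> H0 H1 HS.
rewrite (bigD1_seq y) ?mem_index_iota ?iota_uniq //=; last lia.
rewrite HS // eqxx big1_seq ?addn0 // => d /andP [Hd]; rewrite mem_index_iota => Hd'.
by rewrite HS ?(negbTE Hd) //; lia.
Qed.

Lemma sum_pred_size (f : nat -> nat) (s : seq nat) : (forall x, x \in s -> 0 < f x) ->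
  \sum_(x <- s) (f x).-1 + size s = \sum_(x <- s) f x.
Proof.
elim: s => [|x s IH] H; first by rewrite !big_nil.
rewrite !big_cons /= -IH; last by move=> y Hy; apply: H; rewrite inE Hy orbT.
have := H x (mem_head _ _); case: (f x) => // fx _; lia.
Qed.

Lemma ord_split (f : nat -> nat) b : 0 < b -> \sum_(i < b) f i = f 0 + \sum_(1 <= i < b) f i.
Proof. by move=> Hb; rewrite -(big_mkord xpredT f) big_ltn. Qed.


Theorem mainTheorem7 (r : seq nat) (k : nat) (S : nat -> pred nat) :
  1 <= nint r ->
  (* ell = -sum_d (d-1) r_d >= 1, i.e. sum_d d r_d + 1 <= sum_d r_d *)
  (\sum_(d < size r) d * rr r d).+1 <= \sum_(d < size r) rr r d ->
  in_V r S ->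
  has_card (in_CF1 r k S)
    ((\prod_(1 <= d < size r) d ^ rr r d) *
     \prod_(1 <= i < nint r) (rr r 0 + i * (1 + k))).
Proof.
move=> Hn HAB HV.
have HV' := HV; case: HV' => _ _ HcS.
set n := nint r in Hn HcS *.
set sz := size r in HAB *.
set A := \sum_(d < sz) rr r d in HAB.
set B := \sum_(d < sz) d * rr r d in HAB.
set L := iota 1 n.
set del := delS r S.
set l := A - B.
have Hsz : 1 < sz.
  rewrite ltnNge; apply/negP => H; move: Hn; rewrite /n /nint big_geq //.
have HA : A = rr r 0 + n by rewrite /A (ord_split (fun d => rr r d)) //; lia.
have HB : B = \sum_(1 <= d < sz) d * rr r d.
  by rewrite /B (ord_split (fun d => d * rr r d)) //; lia.
have Hd : Hdel S del L := Hdel_iota HV.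
have HdL : forall x, x \in L -> 0 < del x /\ del x < sz.
  move=> x; rewrite mem_iota => Hx.
  have Hx' : 1 <= x <= n by lia.
  by have [H1 _ H3] := delS_spec HV Hx'.
have HP : \prod_(x <- L) del x = \prod_(1 <= d < sz) d ^ rr r d.
  rewrite (eq_big_seq (fun x => \prod_(1 <= d < sz) (if S d x then d else 1))); last first.
    move=> x Hx; have [H0 H1] := HdL x Hx; apply: sel_prod => //; exact: (Hd x Hx).2.
  rewrite exchange_big /=; apply: eq_big_nat => d Hd'; rewrite prod_if_count HcS //; lia.
have HS : \sum_(x <- L) del x = B.
  rewrite (eq_big_seq (fun x => \sum_(1 <= d < sz) (if S d x then d else 0))); last first.
    move=> x Hx; have [H0 H1] := HdL x Hx; apply: sel_sum => //; exact: (Hd x Hx).2.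
  rewrite exchange_big HB /=; apply: eq_big_nat => d Hd'; rewrite sum_if_count HcS //; lia.
have Hr0 : r0f del L l = rr r 0.
  rewrite /r0f; have := @sum_pred_size del L (fun x Hx => (HdL x Hx).1).
  rewrite HS size_iota; lia.
have Hcnt : forall F, perm_eq (flabels F) L -> all (tvalid k S) F ->
    forall i, 0 < i -> count_mem i (fdegs F) = rr r i.
  move=> F Hp Hv i Hi.
  rewrite (@count_fdegs k S del F i Hi _ Hv); last first.
    by move=> x Hx; apply: Hd; rewrite -(perm_mem Hp).
  move/permP: Hp => Hp; rewrite Hp -HcS //.
  by apply: eq_in_count => x Hx /=; rewrite (Hd x Hx).2 // eq_sym.
have Hlt : forall F, (forall i, 0 < i -> count_mem i (fdegs F) = rr r i) ->
    all (fun x => x < sz) (fdegs F).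
  move=> F Hc; apply/allP => x0 Hx; case: x0 Hx => [|x] Hx; first lia.
  apply: rr_pos; rewrite -Hc // -has_count; apply/hasP; exists x.+1 => //=.
have key := @main_count k S del n L (size_iota _ _) (iota_uniq _ _) Hd 1
  ltac:(by rewrite mem_iota; lia) ltac:(by move=> x; rewrite mem_iota; lia) l 0 ltac:(lia).
apply: (hc_ext _ _ key).
  move=> F; rewrite /Gj /in_CF1.
  have E2 : 1 \in tlabels (nth Leaf F 0) <->
            match F with t :: _ => 1 \in tlabels t | [::] => False end.
    by case: F.
  rewrite -E2; split=> -[HG H1]; split=> //.
    case: HG => Hs Hp Hv; split=> // i.
    have [E1 E2'] := sum_count_ord (Hlt F (Hcnt F Hp Hv)).
    have Hsf := sumn_fdegs F.
    case: i => [|i]; last by apply: Hcnt.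
    rewrite (ord_split (fun i => count_mem i (fdegs F)) (ltnW Hsz)) in E1.
    rewrite (ord_split (fun i => i * count_mem i (fdegs F)) (ltnW Hsz)) in E2'.
    rewrite (eq_big_nat _ _ (F2 := fun i => rr r i)) in E1; last by move=> i Hi; apply: Hcnt; lia.
    rewrite (eq_big_nat _ _ (F2 := fun i => i * rr r i)) in E2'; last first.
      by move=> i Hi; rewrite Hcnt //; lia.
    rewrite -HB in E2'.
    have Hn' : \sum_(1 <= i < sz) rr r i = n by [].
    rewrite Hn' in E1.
    rewrite /l in Hs; lia.
  case: HG => Hc Hp Hv; split=> //.
  have Hc' : forall i, 0 < i -> count_mem i (fdegs F) = rr r i by move=> i _; exact: Hc.
  have [E1 E2'] := sum_count_ord (Hlt F Hc').
  have Hsf := sumn_fdegs F.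
  rewrite (eq_bigr (fun i : 'I_sz => rr r i)) in E1; last by move=> i _; exact: Hc.
  rewrite (eq_bigr (fun i : 'I_sz => i * rr r i)) in E2'; last by move=> i _; rewrite Hc.
  rewrite -/A in E1; rewrite -/B in E2'.
  rewrite /l; lia.
by rewrite /W Hr0 HP size_iota.
Qed.
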